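(* Let $Q$ be a quadrangulation with a strong labeling. Walking along the boundary of any bounded face of $Q$ in clockwise order, the labels of consecutive angles change precisely when moving from a black vertex to a white vertex.
   Context: A quadrangulation is a simple plane graph with at least four vertices all of whose faces (including the outer face) are bounded by $4$-cycles; it is bipartite, and its vertices are properly colored black and white. An angle is an incidence of a vertex with a face (a corner of a face at a vertex). A strong labeling of $Q$ is a map from the angles of $Q$ to $\{0,1\}$ such that: (G0) the two black vertices on the outer face are named $s_0$ and $s_1$, and all angles at $s_i$ are labeled $i$; (G1) for each vertex $v\notin\{s_0,s_1\}$ the labels around $v$ form one non-empty cyclic interval of $1$s and one non-empty cyclic interval of $0$s; (G2) for each edge, the two labels on the two sides of the edge coincide at one endpoint and differ at the other; (G3) the labels in each bounded face, read cyclically, are $0,0,1,1$, and reading the labels of the outer face in clockwise order starting at $s_0$ they are $0,0,1,1$. *)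

(* Defs.v *)
(* Plane graphs are encoded as combinatorial maps (rotation
   systems) of genus 0. *)
From mathcomp Require Import all_boot fingroup perm.
Set Implicit Arguments.
Unset Strict Implicit.
Unset Printing Implicit Defensive.

Section QuadDefs.
Variables (D V : finType).
(* D : darts (half-edges); V : vertices.
   alpha : the edge involution (reverses a dart).
   sigma : successor of a dart in CLOCKWISE order around its tail vertex
           (the plane embedding).
   tail  : the vertex a dart starts from.
   The angle (corner) represented by dart d is the angular sector at tail d
   swept clockwise from d to sigma d. *)
Variables (alpha sigma : {perm D}) (tail : D -> V).

(* next angle along a face, keeping the face on the LEFT; for bounded faces
   this is counterclockwise, for the outer face it is clockwise in the plane *)
Definition face_ccw (d : D) : D := alpha (sigma d).
(* next angle along a face, keeping the face on the RIGHT; for bounded faces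
   this is the clockwise traversal in the plane *)
Definition face_cw (d : D) : D := (sigma^-1)%g (alpha d).

Definition plane_map : Prop :=
  [/\ (forall d, alpha (alpha d) = d) /\ (forall d, alpha d != d),
      forall d d', (tail d == tail d') = fconnect sigma d d',
      forall v, exists d, tail d = v,
      forall d d', connect (fun x y => (y == sigma x) || (y == alpha x)) d d'
    & (* Euler's formula: #V - #E + #F = 2 *)
      #|V| + fcard face_ccw D = #|D| %/ 2 + 2 ].

Definition simple_map : Prop :=
  (forall d, tail (alpha d) != tail d) /\
  (forall d d', tail d = tail d' -> tail (alpha d) = tail (alpha d') -> d = d').

Definition same_face (d d' : D) : bool := fconnect face_ccw d d'.

(* quadrangulation with outer face the face containing the angle o *)
Definition quadrangulation (o : D) : Prop :=
  [/\ plane_map, simple_map, 4 <= #|V| &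
      forall d, size (fingraph.orbit face_ccw d) = 4 /\ uniq (map tail (fingraph.orbit face_ccw d))].

(* proper black (true) / white (false) colouring *)
Definition proper_coloring (black : V -> bool) : Prop :=
  forall d, black (tail (alpha d)) != black (tail d).

(* strong labeling lab : angles -> {0,1} (false = 0, true = 1) *)
Definition strong_labeling (o : D) (black : V -> bool) (s0 s1 : V)
    (lab : D -> bool) : Prop :=
  [/\
      [/\ [&& s0 != s1, black s0 & black s1],
          exists2 d, same_face o d & tail d = s0,
          exists2 d, same_face o d & tail d = s1,
          forall d, tail d = s0 -> lab d = false &
          forall d, tail d = s1 -> lab d = true],
      (* G1: around v the labels form one nonempty cyclic interval of 1s
         followed by one nonempty cyclic interval of 0s *)
      (forall v, v != s0 -> v != s1 ->
         exists d, [/\ tail d = v &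
           exists k, [/\ 0 < k, k < fingraph.order sigma d &
             forall i, i < fingraph.order sigma d -> lab (iter i sigma d) = (i < k)]]),
      (* G2: the angles on the two sides of the edge {d, alpha d} at tail d are
         sigma^-1 d and d; they coincide at exactly one endpoint *)
      (forall d, (lab ((sigma^-1)%g d) == lab d)
                 != (lab ((sigma^-1)%g (alpha d)) == lab (alpha d))),
      (forall d, ~~ same_face o d ->
         exists i, [/\ i < 4, lab (iter i face_cw d) = false,
                   lab (iter i.+1 face_cw d) = false,
                   lab (iter i.+2 face_cw d) = true &
                   lab (iter i.+3 face_cw d) = true]) &
      (* G3, outer face: clockwise (in the plane) from s0: 0,0,1,1 *)
      (exists2 c, same_face o c & [/\ tail c = s0,
          lab c = false, lab (face_ccw c) = false,
          lab (iter 2 face_ccw c) = true & lab (iter 3 face_ccw c) = true])].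

End QuadDefs.

(* Main.v *)
Require Import Defs.
From mathcomp Require Import all_boot fingroup perm.

Theorem lemma9 (D V : finType) (alpha sigma : {perm D}) (tail : D -> V)
    (o : D) (black : V -> bool) (s0 s1 : V) (lab : D -> bool) :
  quadrangulation alpha sigma tail o ->
  proper_coloring alpha tail black ->
  strong_labeling alpha sigma tail o black s0 s1 lab ->
  forall d, ~~ same_face alpha sigma o d ->
    (lab (face_cw alpha sigma d) != lab d)
      = black (tail d) && ~~ black (tail (face_cw alpha sigma d)).
Proof.
move=> [[[aK aNe] tailE tailS conn euler] [simp1 simp2] card4 orb4] col
  [[G0a G0b G0c G0d G0e] G1 G2 G3b [c oc [tc lc0 lc1 lc2 lc3]]] d dnot.
have ccwK : forall x, face_ccw alpha sigma (face_cw alpha sigma x) = x.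
  by move=> x; rewrite /face_ccw /face_cw permKV aK.
have cwK : forall x, face_cw alpha sigma (face_ccw alpha sigma x) = x.
  by move=> x; rewrite /face_ccw /face_cw aK permK.
have injccw : injective (face_ccw alpha sigma) := can_inj cwK.
have tS : forall x, tail (sigma x) = tail x.
  by move=> x; apply/esym/eqP; rewrite tailE; apply: fconnect1.
have tSV : forall x, tail ((sigma^-1)%g x) = tail x.
  by move=> x; rewrite -{2}(permKV sigma x) tS.
have bA : forall x, black (tail (alpha x)) = ~~ black (tail x).
  by move=> x; have:= col x; case: (black _); case: (black _).
have bcw : forall x, black (tail (face_cw alpha sigma x)) = ~~ black (tail x).
  by move=> x; rewrite /face_cw tSV bA.
have bccw : forall x, black (tail (face_ccw alpha sigma x)) = ~~ black (tail x).
  by move=> x; rewrite /face_ccw bA tS.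
have ccw4 : forall x, iter 4 (face_ccw alpha sigma) x = x.
  move=> x; have [sz _] := orb4 x; rewrite size_orbit in sz.
  by rewrite -{1}sz iter_order.
have cw4 : forall x, iter 4 (face_cw alpha sigma) x = x.
  move=> x; rewrite -{1}(ccw4 (iter 4 (face_cw alpha sigma) x)) /=.
  by rewrite !ccwK.
pose good x := (lab (face_cw alpha sigma x) != lab x) == black (tail x).
have gA : forall x, good (alpha x) = good x.
  move=> x; rewrite /good /face_cw aK bA; move: (G2 x).
  case: (lab (sigma^-1 x)%g); case: (lab x); case: (lab (sigma^-1 (alpha x))%g);
  case: (lab (alpha x)); by case: (black _).
have gcw : forall x, good (face_cw alpha sigma x) = good x.
  move=> x; case: (boolP (same_face alpha sigma o x)) => hx.
  - have cx : fconnect (face_ccw alpha sigma) c x.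
      apply: connect_trans hx; by rewrite fconnect_sym.
    have kmax := findex_max cx; have ik := iter_findex cx.
    have [sz _] := orb4 c; rewrite size_orbit in sz; rewrite sz in kmax.
    have bc : black (tail c) by rewrite tc; case/and3P: G0a.
    have cwc : face_cw alpha sigma c = iter 3 (face_ccw alpha sigma) c.
      by rewrite -{1}(ccw4 c) /= cwK.
    rewrite -ik; move: (findex _ _ _) kmax => [|[|[|[|k]]]] // _ /=;
    rewrite /good /= ?cwK ?cwc /= ?cwK !bccw bc /=;
    move: lc1 lc2 lc3 => /= lc1 lc2 lc3; by rewrite ?lc3 ?lc2 ?lc1 ?lc0.
  - have [i [hi l0 l1 l2 l3]] := G3b x hx.
    have e5 : iter 5 (face_cw alpha sigma) x = face_cw alpha sigma x.
      by rewrite (iterS 4) cw4.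
    have e6 : iter 6 (face_cw alpha sigma) x =
              face_cw alpha sigma (face_cw alpha sigma x).
      by rewrite iterS (iterS 4) cw4.
    have ne : lab (face_cw alpha sigma (face_cw alpha sigma x)) != lab x.
      move: i hi l0 l1 l2 l3 => [|[|[|[|i]]]] // _;
      rewrite ?cw4 ?e5 ?e6 /= => l0 l1 l2 l3; by rewrite ?l0 ?l1 ?l2 ?l3 ?l0.
    rewrite /good bcw; move: ne.
    case: (lab (face_cw alpha sigma (face_cw alpha sigma x)));
    case: (lab (face_cw alpha sigma x)); case: (lab x); by case: (black _).
have gS : forall x, good (sigma x) = good x.
  move=> x; have -> : sigma x = alpha (face_ccw alpha sigma x).
    by rewrite /face_ccw aK.
  by rewrite gA -{2}(cwK x) gcw.
have cl : closed (fun x y => (y == sigma x) || (y == alpha x)) [pred x | good x].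
  move=> x y /orP[] /eqP ->; by rewrite !inE ?gS ?gA.
have gc : good c.
  rewrite /good.
  have -> : face_cw alpha sigma c = iter 3 (face_ccw alpha sigma) c.
    by rewrite -{1}(ccw4 c) /= cwK.
  rewrite lc3 lc0 tc; by case/and3P: G0a.
have gd : good d.
  by have := closed_connect cl (conn c d); rewrite !inE gc => <-.
rewrite bcw; move: gd; rewrite /good; by case: (black _); case: (_ != _).
Qed.
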